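(* Let $G$ and $H$ be graphs. (i) If $G$ has a point-finite and honest $H$-decomposition into connected parts of finitely bounded size and $H$ is accessible, then $G$ is accessible. (ii) If $G$ has an honest $H$-decomposition into finite connected parts such that the graphs $H_v\subseteq H$ ($v\in V(G)$) have finitely bounded order and $G$ is accessible, then $H$ is accessible.
   Context: An $H$-decomposition of $G$ is a pair $(H,(G_h)_{h\in H})$ of subgraphs $G_h\subseteq G$ with $G=\bigcup_h G_h$ and, for every vertex $v$ of $G$, $H_v:=H[\{h:v\in G_h\}]$ connected. It is point-finite if every $H_v$ is finite and honest if $G_h\cap G_{h'}\neq\emptyset$ for every edge $hh'$ of $H$; its parts are the $G_h$. An end of a graph is an equivalence class of rays, two rays being equivalent if for every finite vertex set $X$ they have tails in the same component of the graph minus $X$. A separation of a graph is $\{A,B\}$ with $A\cup B$ the vertex set and no edge between $A\setminus B$ and $B\setminus A$, of order $|A\cap B|$; a finite-order separation distinguishes two ends if rays of one have tails in the subgraph induced by $A$ and rays of the other have tails in that induced by $B$. A graph is accessible if there is $K\in\mathbb{N}$ such that every two of its ends are distinguished by a separation of order at most $K$. *)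

(* Defs.v *)
From Stdlib Require Import List Arith.
Import ListNotations.

Record Graph := {
  vert :> Type;
  adj : vert -> vert -> Prop;
  adj_sym : forall x y, adj x y -> adj y x;
  adj_irrefl : forall x, ~ adj x x }.

Definition card_le {T : Type} (S : T -> Prop) (n : nat) : Prop :=
  exists l : list T, length l <= n /\ forall x, S x -> In x l.

Definition finite_set {T : Type} (S : T -> Prop) : Prop := exists n, card_le S n.

Inductive reach {T : Type} (R : T -> T -> Prop) (S : T -> Prop) : T -> T -> Prop :=
  | reach_refl x : S x -> reach R S x x
  | reach_step x y z : reach R S x y -> R y z -> S z -> reach R S x z.

Definition connected_sub {T : Type} (S : T -> Prop) (R : T -> T -> Prop) : Prop :=
  (exists x, S x) /\ forall x y, S x -> S y -> reach R S x y.

Definition connected_induced (G : Graph) (S : G -> Prop) : Prop :=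
  connected_sub S (@adj G).

(** H-decomposition (H, (G_h)_{h in H}) of G: part G_h has vertex set [GS h]
    and (symmetric) edge relation [GE h]. *)
Definition Hdecomp (G H : Graph) (GS : H -> G -> Prop) (GE : H -> G -> G -> Prop) : Prop :=
  (forall h x y, GE h x y -> adj G x y /\ GS h x /\ GS h y) /\
  (forall h x y, GE h x y -> GE h y x) /\
  (forall v : G, exists h, GS h v) /\
  (forall x y : G, adj G x y -> exists h, GE h x y) /\
  (forall v : G, connected_induced H (fun h => GS h v)).

Arguments Hdecomp {G H} GS GE.

Definition point_finite (G H : Graph) (GS : H -> G -> Prop) : Prop :=
  forall v : G, finite_set (fun h => GS h v).

Arguments point_finite {G H} GS.

Definition honest (G H : Graph) (GS : H -> G -> Prop) : Prop :=
  forall h h' : H, adj H h h' -> exists v : G, GS h v /\ GS h' v.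

Arguments reach {T} R S _ _.

Arguments honest {G H} GS.

Definition ray (G : Graph) (r : nat -> G) : Prop :=
  (forall m n, r m = r n -> m = n) /\ (forall n, adj G (r n) (r (S n))).

Arguments ray {G} r.

Definition ray_equiv (G : Graph) (r s : nat -> G) : Prop :=
  forall X : list G, exists N M,
    (forall n, N <= n -> ~ In (r n) X) /\
    (forall m, M <= m -> ~ In (s m) X) /\
    reach (@adj G) (fun x => ~ In x X) (r N) (s M).

Arguments ray_equiv {G} r s.

Definition separation (G : Graph) (A B : G -> Prop) : Prop :=
  (forall v, A v \/ B v) /\
  (forall x y, adj G x y -> ~ (A x /\ ~ B x /\ B y /\ ~ A y)).

Arguments separation {G} A B.

Definition tail_in (G : Graph) (A : G -> Prop) (r : nat -> G) : Prop :=
  exists N, forall n, N <= n -> A (r n).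

Arguments tail_in {G} A r.

Definition distinguishes (G : Graph) (A B : G -> Prop) (r s : nat -> G) : Prop :=
  (forall r' : nat -> G, ray r' -> ray_equiv r r' -> tail_in A r') /\
  (forall s' : nat -> G, ray s' -> ray_equiv s s' -> tail_in B s').

Arguments distinguishes {G} A B r s.

Definition accessible (G : Graph) : Prop :=
  exists K : nat, forall r s : nat -> G, ray r -> ray s -> ~ ray_equiv r s ->
    exists A B : G -> Prop,
      separation A B /\ card_le (fun v => A v /\ B v) K /\ distinguishes A B r s.

(* Main.v *)
Require Import Defs.
From Stdlib Require Import List Arith Lia Classical ClassicalEpsilon.
Import ListNotations.

Lemma fchoice {A B : Type} (R : A -> B -> Prop) :
  (forall a, exists b, R a b) -> exists f : A -> B, forall a, R a (f a).
Proof.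
  intros H. exists (fun a => proj1_sig (constructive_indefinite_description _ (H a))).
  intro a. exact (proj2_sig (constructive_indefinite_description _ (H a))).
Qed.

Lemma reach_in {T} (R : T -> T -> Prop) S x y : reach R S x y -> S x /\ S y.
Proof. induction 1; intuition. Qed.

Lemma reach_trans {T} (R : T -> T -> Prop) S x y z :
  reach R S x y -> reach R S y z -> reach R S x z.
Proof.
  intros H1 H2. revert H1. induction H2 as [w Hw|w1 w2 w3 Ha IH Hb Hc]; intros H1; auto.
  apply reach_step with w2; auto.
Qed.

Lemma reach_mono {T} (R R' : T -> T -> Prop) (S S' : T -> Prop) x y :
  (forall a b, R a b -> R' a b) -> (forall a, S a -> S' a) ->
  reach R S x y -> reach R' S' x y.
Proof. intros HR HS; induction 1; [constructor; auto | econstructor; eauto]. Qed.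

Lemma reach_sym {T} (R : T -> T -> Prop) S x y :
  (forall a b, R a b -> R b a) -> reach R S x y -> reach R S y x.
Proof.
  intros Hs; induction 1 as [x Hx| x y z H1 IH H2 H3].
  - constructor; auto.
  - apply reach_trans with y; auto.
    apply reach_step with z; auto. constructor; auto.
    apply (reach_in _ _ _ _ H1).
Qed.

Lemma reach_ray (G : Graph) (r : nat -> G) (Q : G -> Prop) N :
  ray r -> (forall n, N <= n -> Q (r n)) ->
  forall n, N <= n -> reach (adj G) Q (r N) (r n).
Proof.
  intros [_ Hr] HS.
  assert (forall d, reach (adj G) Q (r N) (r (N + d))).
  { induction d.
    - rewrite Nat.add_0_r. constructor. apply HS; lia.
    - apply reach_step with (r (N + d)); auto.
      + replace (N + S d) with (S (N + d)) by lia. apply Hr.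
      + apply HS; lia. }
  intros n Hn. replace n with (N + (n - N)) by lia. auto.
Qed.

Lemma ray_avoid (G : Graph) (r : nat -> G) (X : list G) :
  (forall m n, r m = r n -> m = n) -> exists N, forall n, N <= n -> ~ In (r n) X.
Proof.
  intros Hi. induction X as [|a X IH].
  - exists 0. intros n _ H. inversion H.
  - destruct IH as [N HN].
    destruct (classic (exists m, r m = a)) as [[m Hm]|Hno].
    + exists (max N (S m)). intros n Hn [H|H].
      * subst a. apply Hi in H. lia.
      * apply (HN n); auto; lia.
    + exists N. intros n Hn [H|H].
      * apply Hno; eauto.
      * apply (HN n); auto.
Qed.

Lemma card_bound (G : Graph) (r : nat -> G) (S : G -> Prop) K :
  (forall m n, r m = r n -> m = n) -> card_le S K -> exists B, forall n, S (r n) -> n < B.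
Proof.
  intros Hi [l [_ Hl]]. destruct (ray_avoid G r l Hi) as [N HN].
  exists N. intros n Hn. destruct (le_lt_dec N n) as [h|h]; auto.
  exfalso. apply (HN n h). auto.
Qed.

Lemma cross (G : Graph) (A B S : G -> Prop) x y :
  separation A B -> reach (adj G) S x y -> A x -> B y -> exists z, S z /\ A z /\ B z.
Proof.
  intros [Hc He] Hr. induction Hr as [x Hx| x y z H1 IH H2 H3]; intros Ha Hb.
  - exists x; auto.
  - destruct (classic (B y)) as [Hy|Hy]; auto.
    assert (A y) by (destruct (Hc y); tauto).
    destruct (classic (A z)) as [Hz|Hz].
    + exists z; auto.
    + exfalso. apply (He y z); tauto.
Qed.

Lemma stay (G : Graph) (A B : G -> Prop) (X : list G) x y :
  separation A B -> (forall v, A v -> B v -> In v X) ->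
  reach (adj G) (fun v => ~ In v X) x y -> A x -> A y.
Proof.
  intros [Hc He] HX Hr. induction Hr as [x Hx| x y z H1 IH H2 H3]; intros Ha; auto.
  specialize (IH Ha).
  destruct (classic (A z)) as [Hz|Hz]; auto.
  exfalso. assert (~ In y X) by apply (reach_in _ _ _ _ H1).
  assert (B z) by (destruct (Hc z); tauto).
  apply (He y z H2). repeat split; auto.
Qed.

Lemma sep_sym (G : Graph) (A B : G -> Prop) : separation A B -> separation B A.
Proof.
  intros [Hc He]; split.
  - intros v; destruct (Hc v); auto.
  - intros x y Hxy H. apply (He y x (adj_sym G x y Hxy)). tauto.
Qed.

Lemma ray_equiv_refl (G : Graph) (r : nat -> G) : ray r -> ray_equiv r r.
Proof.
  intros Hr X. destruct (ray_avoid G r X (proj1 Hr)) as [N HN].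
  exists N, N. repeat split; auto. constructor. apply HN; lia.
Qed.

Definition inf_often {G : Graph} (A : G -> Prop) (r : nat -> G) :=
  forall N, exists n, N <= n /\ A (r n).

Lemma propagate (G : Graph) (A B : G -> Prop) (X : list G) r r' :
  separation A B -> (forall v, A v -> B v -> In v X) -> ray r -> ray r' ->
  inf_often A r -> ray_equiv r r' -> tail_in A r'.
Proof.
  intros Hs HX Hr Hr' Hinf Heq.
  destruct (Heq X) as [N [M [H1 [H2 H3]]]].
  destruct (Hinf N) as [n [Hn Ha]].
  exists M. intros m Hm.
  apply (stay G A B X (r n)); auto.
  apply reach_trans with (r N).
  - apply reach_sym; [apply adj_sym|]. apply reach_ray; auto.
  - apply reach_trans with (r' M); auto. apply reach_ray; auto.
Qed.

Lemma make_dist (G : Graph) (A B : G -> Prop) (X : list G) r s :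
  separation A B -> (forall v, A v -> B v -> In v X) -> ray r -> ray s ->
  inf_often A r -> inf_often B s -> distinguishes A B r s.
Proof.
  intros Hs HX Hr Hs' HA HB. split; intros.
  - apply (propagate G A B X r); auto.
  - apply (propagate G B A X s); auto. apply sep_sym; auto.
Qed.

Lemma concat_bound {T U : Type} (R : T -> U -> Prop) K (l : list T) :
  (forall t, card_le (R t) K) ->
  exists L, length L <= length l * K /\ forall t u, In t l -> R t u -> In u L.
Proof.
  intros HR. induction l as [|a l IH].
  - exists []. simpl. split; [lia| tauto].
  - destruct IH as [L [HL HL2]]. destruct (HR a) as [la [Hla Hla2]].
    exists (la ++ L). rewrite length_app. simpl. split; [lia|].
    intros t u [<-|Ht] Hu; apply in_or_app; [left|right]; eauto.
Qed.

Lemma concat_fin {T U : Type} (R : T -> U -> Prop) (l : list T) :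
  (forall t, finite_set (R t)) ->
  exists L, forall t u, In t l -> R t u -> In u L.
Proof.
  intros HR. induction l as [|a l IH].
  - exists []. simpl. tauto.
  - destruct IH as [L HL2]. destruct (HR a) as [K [la [_ Hla2]]].
    exists (la ++ L).
    intros t u [<-|Ht] Hu; apply in_or_app; [left|right]; eauto.
Qed.

Fixpoint chain {T} (E : T -> T -> Prop) (x : T) (l : list T) (y : T) : Prop :=
  match l with [] => E x y | a :: l' => E x a /\ chain E a l' y end.

Lemma chain_app {T} (E : T -> T -> Prop) x l y z :
  chain E x l y -> E y z -> chain E x (l ++ [y]) z.
Proof. revert x; induction l; simpl; intuition. Qed.

Definition Eo (G : Graph) (a b : G) := a = b \/ adj G a b.

Lemma reach_chain (G : Graph) (Q : G -> Prop) x y :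
  reach (adj G) Q x y -> exists l, chain (Eo G) x l y /\ Forall Q l.
Proof.
  induction 1 as [x Hx| x y z H1 IH H2 H3].
  - exists []. simpl. split; [left; auto| constructor].
  - destruct IH as [l [Hl Hl2]]. exists (l ++ [y]). split.
    + apply chain_app; auto. right; auto.
    + apply Forall_app; split; auto. constructor; [|constructor].
      apply (reach_in _ _ _ _ H1).
Qed.

Definition nxt {T : Type} (c : nat -> T) (q : nat -> list T) (s : nat * T * list T) :=
  match s with
  | (n, x, []) => (S n, c (S n), q (S n))
  | (n, x, a :: l) => (n, a, l)
  end.

Fixpoint it {A : Type} (f : A -> A) (k : nat) (s : A) : A :=
  match k with 0 => s | S k => it f k (f s) end.

Lemma it_S {A} (f : A -> A) k s : it f (S k) s = f (it f k s).
Proof. revert s; induction k; intros s; simpl; auto. rewrite <- IHk. reflexivity. Qed.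

Lemma it_add {A} (f : A -> A) a b s : it f (a + b) s = it f b (it f a s).
Proof. revert s; induction a; intros s; simpl; auto. Qed.

Lemma max_exists (Q : nat -> Prop) B m : Q m -> (forall k, Q k -> k < B) ->
  exists t, Q t /\ forall k, Q k -> k <= t.
Proof.
  revert m. induction B; intros m Hm HB.
  - specialize (HB m Hm). lia.
  - destruct (classic (Q B)) as [HQ|HQ].
    + exists B. split; auto. intros k Hk. specialize (HB k Hk). lia.
    + apply (IHB m); auto. intros k Hk. specialize (HB k Hk).
      destruct (Nat.eq_dec k B); [subst; contradiction| lia].
Qed.

Fixpoint tseq (LT : nat -> nat) (k : nat) : nat :=
  match k with 0 => LT 0 | S k' => LT (S (tseq LT k')) end.

Lemma chain_ray (G : Graph) (P : nat -> G -> Prop) :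
  (forall n x y, P n x -> P n y -> reach (adj G) (P n) x y) ->
  (forall n, exists v, P n v /\ P (S n) v) ->
  (forall v, exists B, forall n, P n v -> n < B) ->
  exists (rho : nat -> G) (g : nat -> nat), ray rho /\ (forall k, P (g k) (rho k)) /\
    (forall T, exists K0, forall k, K0 <= k -> T <= g k).
Proof.
  intros Hconn Hint Hfin.
  destruct (fchoice _ Hint) as [c Hc].
  assert (Hq : forall n, exists l, chain (Eo G) (c n) l (c (S n)) /\ Forall (P (S n)) l).
  { intros n. apply reach_chain. apply Hconn. apply Hc. apply Hc. }
  destruct (fchoice _ Hq) as [q Hq2].
  set (st := fun m => it (nxt c q) m (0, c 0, q 0)).
  set (idx := fun s : nat * G * list G => fst (fst s)).
  set (val := fun s : nat * G * list G => snd (fst s)).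
  set (Inv := fun s : nat * G * list G =>
    P (S (idx s)) (val s) /\ Forall (P (S (idx s))) (snd s) /\ chain (Eo G) (val s) (snd s) (c (S (idx s)))).
  assert (HInv0 : Inv (0, c 0, q 0)).
  { unfold Inv, idx, val; simpl. split; [apply Hc| split; apply Hq2]. }
  assert (HInvS : forall s, Inv s -> Inv (nxt c q s) /\ Eo G (val s) (val (nxt c q s))
                        /\ idx s <= idx (nxt c q s)).
  { intros [[n x] l] [H1 [H2 H3]]. unfold idx, val in *; simpl in *. destruct l as [|a l]; simpl in *.
    - split; [|split; auto]. split; [apply Hc| split; apply Hq2].
    - inversion H2; subst. destruct H3. split; [split; [|split]|split]; auto. }
  assert (HInv : forall m, Inv (st m)).
  { induction m; unfold st in *; [exact HInv0|]. rewrite it_S. apply HInvS; auto. }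
  assert (Hstep : forall m, Eo G (val (st m)) (val (st (S m)))).
  { intros m. unfold st. rewrite it_S. apply HInvS, HInv. }
  assert (Hmono1 : forall m, idx (st m) <= idx (st (S m))).
  { intros m. unfold st. rewrite it_S. apply HInvS, HInv. }
  assert (Hmono : forall m d, idx (st m) <= idx (st (m + d))).
  { intros m d. induction d. rewrite Nat.add_0_r; auto.
    rewrite Nat.add_succ_r. apply Nat.le_trans with (idx (st (m + d))); [apply IHd| apply Hmono1]. }
  assert (Hprog : forall l n x, idx (it (nxt c q) (S (length l)) (n, x, l)) = S n).
  { induction l as [|a l IH]; intros n x; [reflexivity|]. exact (IH n a). }
  assert (Hgrow : forall N, exists M, N <= idx (st M)).
  { induction N. exists 0; lia. destruct IHN as [M HM].
    destruct (st M) as [[n x] l] eqn:E.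
    exists (M + S (length l)). unfold st. rewrite it_add. fold (st M). rewrite E.
    rewrite Hprog. unfold idx in HM; simpl in HM. lia. }
  assert (Hgrow2 : forall N, exists M, forall m, M <= m -> N <= idx (st m)).
  { intros N. destruct (Hgrow N) as [M HM]. exists M. intros m Hm.
    replace m with (M + (m - M)) by lia. eapply Nat.le_trans; [apply HM| apply Hmono]. }
  set (w := fun m => val (st m)).
  assert (Hw : forall m, P (S (idx (st m))) (w m)) by (intros m; apply HInv).
  assert (Hwfin : forall v, exists B, forall m, w m = v -> m < B).
  { intros v. destruct (Hfin v) as [Bv HBv]. destruct (Hgrow2 Bv) as [M HM].
    exists M. intros m Hm. destruct (le_lt_dec M m) as [h|h]; auto.
    specialize (HM m h). specialize (Hw m). rewrite Hm in Hw. apply HBv in Hw. lia. }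
  assert (HLT : forall m, exists t, m <= t /\ w t = w m /\ forall m', w m' = w m -> m' <= t).
  { intros m. destruct (Hwfin (w m)) as [B HB].
    destruct (max_exists (fun k => w k = w m) B m eq_refl HB) as [t [Ht1 Ht2]].
    exists t. split; [apply Ht2; reflexivity| split; auto]. }
  destruct (fchoice _ HLT) as [LT HLT2].
  set (t := tseq LT).
  assert (Ht1 : forall k, S (t k) <= t (S k)).
  { intros k. unfold t; simpl. apply (proj1 (HLT2 _)). }
  assert (Ht2 : forall k, w (t (S k)) = w (S (t k))).
  { intros k. unfold t; simpl. apply (proj1 (proj2 (HLT2 _))). }
  assert (Ht3 : forall k m', w m' = w (t k) -> m' <= t k).
  { intros k m' H. unfold t in *. destruct k; simpl in *.
    - destruct (HLT2 0) as [_ [E1 E2]]. apply E2. rewrite H, E1. auto.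
    - destruct (HLT2 (S (tseq LT k))) as [_ [E1 E2]]. apply E2. rewrite H, E1. auto. }
  assert (Hinc : forall i j, i < j -> t i < t j).
  { intros i j Hij. induction Hij.
    - specialize (Ht1 i). lia.
    - specialize (Ht1 m). lia. }
  assert (Hge : forall k, k <= t k).
  { induction k. lia. specialize (Ht1 k). lia. }
  exists (fun k => w (t k)), (fun k => S (idx (st (t k)))).
  split; [split|split].
  - intros i j Hij. destruct (lt_eq_lt_dec i j) as [[h|h]|h]; auto.
    + specialize (Ht3 i (t j) (eq_sym Hij)). specialize (Hinc i j h). lia.
    + specialize (Ht3 j (t i) Hij). specialize (Hinc j i h). lia.
  - intros k. rewrite Ht2. destruct (Hstep (t k)) as [E|E]; auto.
    exfalso. fold (w (t k)) in E. fold (w (S (t k))) in E.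
    specialize (Ht3 k (S (t k)) (eq_sym E)). lia.
  - intros k. apply Hw.
  - intros T. destruct (Hgrow2 T) as [M HM]. exists M. intros k Hk.
    specialize (HM (t k)). specialize (Hge k). assert (T <= idx (st (t k))) by (apply HM; lia). lia.
Qed.

Lemma part1 (G H : Graph) (GS : H -> G -> Prop) (GE : H -> G -> G -> Prop) :
  Hdecomp GS GE -> point_finite GS -> honest GS ->
  (forall h, connected_sub (GS h) (GE h)) ->
  (exists K, forall h, card_le (GS h) K) -> accessible H -> accessible G.
Proof.
  intros [HE1 [HE2 [HE3 [HE4 HE5]]]] Hpf Hhon Hconn [KG HKG] [KH HKH].
  assert (Htr : forall r : nat -> G, ray r -> exists (rH : nat -> H) (g : nat -> nat),
     ray rH /\ (forall k, GS (rH k) (r (S (g k)))) /\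
     (forall T, exists K0, forall k, K0 <= k -> T <= g k)).
  { intros r Hr. apply (chain_ray H (fun n h => GS h (r (S n)))).
    - intros n x y Hx Hy. apply (proj2 (HE5 (r (S n)))); auto.
    - intros n. destruct Hr as [_ Hadj]. destruct (HE4 _ _ (Hadj (S n))) as [h Hh].
      destruct (HE1 _ _ _ Hh) as [_ [? ?]]. exists h; auto.
    - intros h. destruct (card_bound G r (GS h) KG (proj1 Hr) (HKG h)) as [B HB].
      exists B. intros n Hn. specialize (HB _ Hn). lia. }
  assert (Hlift : forall (X : list G) (XH : list H),
     (forall v h, In v X -> GS h v -> In h XH) ->
     forall h h', reach (adj H) (fun h => ~ In h XH) h h' ->
     forall u u', GS h u -> GS h' u' -> reach (adj G) (fun x => ~ In x X) u u').
  { intros X XH HX h h' Hr. induction Hr as [h Hh| h h'' h' H1 IH H2 H3]; intros u u' Hu Hu'.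
    - apply reach_mono with (GE h) (GS h).
      + intros a b Hab. apply (HE1 _ _ _ Hab).
      + intros a Ha Hin. apply Hh. eauto.
      + apply (proj2 (Hconn h)); auto.
    - destruct (Hhon _ _ H2) as [v [Hv1 Hv2]].
      apply reach_trans with v; auto.
      apply reach_mono with (GE h') (GS h').
      + intros a b Hab. apply (HE1 _ _ _ Hab).
      + intros a Ha Hin. apply H3. eauto.
      + apply (proj2 (Hconn h')); auto. }
  exists (KH * KG). intros r s Hr Hs Hne.
  destruct (Htr r Hr) as [rH [gr [HrH [Hgr1 Hgr2]]]].
  destruct (Htr s Hs) as [sH [gs [HsH [Hgs1 Hgs2]]]].
  assert (HneH : ~ ray_equiv rH sH).
  { intros Heq. apply Hne. intros X.
    destruct (concat_fin (fun v h => GS h v) X Hpf) as [XH HXH].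
    destruct (Heq XH) as [N [M [HN [HM Hreach]]]].
    destruct (ray_avoid G r X (proj1 Hr)) as [Nr HNr].
    destruct (ray_avoid G s X (proj1 Hs)) as [Ns HNs].
    destruct (Hgr2 Nr) as [K1 HK1]. destruct (Hgs2 Ns) as [K2 HK2].
    specialize (HK1 (max N K1) ltac:(lia)). specialize (HK2 (max M K2) ltac:(lia)).
    exists (S (gr (max N K1))), (S (gs (max M K2))).
    split; [intros n Hn; apply HNr; lia|].
    split; [intros n Hn; apply HNs; lia|].
    apply (Hlift X XH HXH (rH (max N K1)) (sH (max M K2))); auto.
    apply reach_trans with (rH N).
    - apply reach_sym; [apply adj_sym|]. apply reach_ray; auto. lia.
    - apply reach_trans with (sH M); auto. apply reach_ray; auto. lia. }
  destruct (HKH rH sH HrH HsH HneH) as [AH [BH [Hsep [Hcard Hdist]]]].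
  destruct Hcard as [lH [HlH HinlH]].
  destruct (concat_bound GS KG lH HKG) as [L [HL HinL]].
  exists (fun v => exists h, AH h /\ GS h v), (fun v => exists h, BH h /\ GS h v).
  assert (HsepG : separation (fun v => exists h, AH h /\ GS h v) (fun v => exists h, BH h /\ GS h v)).
  { destruct Hsep as [Hc He]. split.
    - intros v. destruct (HE3 v) as [h Hh]. destruct (Hc h); [left|right]; eauto.
    - intros x y Hxy [_ [Hx [[h2 [Hb2 Hy2]] Hy]]].
      destruct (HE4 _ _ Hxy) as [h Hh]. destruct (HE1 _ _ _ Hh) as [_ [Hhx Hhy]].
      destruct (Hc h) as [Ha|Hb].
      + apply Hy. eauto.
      + apply Hx. eauto. }
  assert (HX : forall v, (exists h, AH h /\ GS h v) -> (exists h, BH h /\ GS h v) -> In v L).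
  { intros v [h1 [Ha1 Hg1]] [h2 [Hb2 Hg2]].
    destruct (cross H AH BH (fun h => GS h v) h1 h2 Hsep) as [h [Hh [Ha Hb]]]; auto.
    apply (proj2 (HE5 v)); auto.
    apply (HinL h); auto. }
  split; [exact HsepG|]. split.
  - exists L. split; [|intros v [Ha Hb]; auto].
    eapply Nat.le_trans; [exact HL| apply Nat.mul_le_mono_r; exact HlH].
  - apply make_dist with L; auto.
    + intros N. destruct (proj1 Hdist rH HrH (ray_equiv_refl _ _ HrH)) as [N0 HN0].
      destruct (Hgr2 N) as [K1 HK1]. specialize (HK1 (max N0 K1) ltac:(lia)).
      exists (S (gr (max N0 K1))). split; [lia|].
      exists (rH (max N0 K1)). split; auto. apply HN0; lia.
    + intros N. destruct (proj2 Hdist sH HsH (ray_equiv_refl _ _ HsH)) as [N0 HN0].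
      destruct (Hgs2 N) as [K1 HK1]. specialize (HK1 (max N0 K1) ltac:(lia)).
      exists (S (gs (max N0 K1))). split; [lia|].
      exists (sH (max N0 K1)). split; auto. apply HN0; lia.
Qed.

Lemma part2 (G H : Graph) (GS : H -> G -> Prop) (GE : H -> G -> G -> Prop) :
  Hdecomp GS GE -> honest GS ->
  (forall h, connected_sub (GS h) (GE h) /\ finite_set (GS h)) ->
  (exists K, forall v : G, card_le (fun h => GS h v) K) ->
  accessible G -> accessible H.
Proof.
  intros [HE1 [HE2 [HE3 [HE4 HE5]]]] Hhon Hconn [KV HKV] [KG HKG].
  assert (Hpart : forall h x y, GS h x -> GS h y -> reach (adj G) (GS h) x y).
  { intros h x y Hx Hy. apply reach_mono with (GE h) (GS h); auto.
    - intros a b Hab. apply (HE1 _ _ _ Hab).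
    - apply (proj2 (proj1 (Hconn h))); auto. }
  assert (Htr : forall r : nat -> H, ray r -> exists (rG : nat -> G) (g : nat -> nat),
     ray rG /\ (forall k, GS (r (S (g k))) (rG k)) /\
     (forall T, exists K0, forall k, K0 <= k -> T <= g k)).
  { intros r Hr. apply (chain_ray G (fun n v => GS (r (S n)) v)).
    - intros n x y Hx Hy. apply Hpart; auto.
    - intros n. destruct Hr as [_ Hadj]. destruct (Hhon _ _ (Hadj (S n))) as [v Hv].
      exists v; auto.
    - intros v. destruct (card_bound H r (fun h => GS h v) KV (proj1 Hr) (HKV v)) as [B HB].
      exists B. intros n Hn. specialize (HB _ Hn). lia. }
  assert (Hlift : forall (XH : list H) (X : list G),
     (forall h v, In h XH -> GS h v -> In v X) ->
     forall u u', reach (adj G) (fun x => ~ In x X) u u' ->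
     forall h h', GS h u -> GS h' u' -> reach (adj H) (fun h => ~ In h XH) h h').
  { intros XH X HX u u' Hr. induction Hr as [u Hu| u u'' u' H1 IH H2 H3]; intros h h' Hh Hh'.
    - apply reach_mono with (adj H) (fun h => GS h u); auto.
      + intros a Ha Hin. apply Hu. eauto.
      + apply (proj2 (HE5 u)); auto.
    - destruct (HE4 _ _ H2) as [h'' Hh''].
      destruct (HE1 _ _ _ Hh'') as [_ [Hv1 Hv2]].
      apply reach_trans with h''; auto.
      apply reach_mono with (adj H) (fun h => GS h u'); auto.
      + intros a Ha Hin. apply H3. eauto.
      + apply (proj2 (HE5 u')); auto. }
  exists (KG * KV). intros r s Hr Hs Hne.
  destruct (Htr r Hr) as [rG [gr [HrG [Hgr1 Hgr2]]]].
  destruct (Htr s Hs) as [sG [gs [HsG [Hgs1 Hgs2]]]].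
  assert (HneG : ~ ray_equiv rG sG).
  { intros Heq. apply Hne. intros XH.
    destruct (concat_fin GS XH (fun h => proj2 (Hconn h))) as [X HX].
    destruct (Heq X) as [N [M [HN [HM Hreach]]]].
    destruct (ray_avoid H r XH (proj1 Hr)) as [Nr HNr].
    destruct (ray_avoid H s XH (proj1 Hs)) as [Ns HNs].
    destruct (Hgr2 Nr) as [K1 HK1]. destruct (Hgs2 Ns) as [K2 HK2].
    specialize (HK1 (max N K1) ltac:(lia)). specialize (HK2 (max M K2) ltac:(lia)).
    exists (S (gr (max N K1))), (S (gs (max M K2))).
    split; [intros n Hn; apply HNr; lia|].
    split; [intros n Hn; apply HNs; lia|].
    apply (Hlift XH X HX (rG (max N K1)) (sG (max M K2))); auto.
    apply reach_trans with (rG N).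
    - apply reach_sym; [apply adj_sym|]. apply reach_ray; auto. lia.
    - apply reach_trans with (sG M); auto. apply reach_ray; auto. lia. }
  destruct (HKG rG sG HrG HsG HneG) as [A [B [Hsep [Hcard Hdist]]]].
  destruct Hcard as [lG [HlG HinlG]].
  destruct (concat_bound (fun v h => GS h v) KV lG HKV) as [L [HL HinL]].
  exists (fun h => exists v, GS h v /\ A v), (fun h => exists v, GS h v /\ B v).
  assert (HsepH : separation (fun h => exists v, GS h v /\ A v) (fun h => exists v, GS h v /\ B v)).
  { destruct Hsep as [Hc He]. split.
    - intros h. destruct (proj1 (proj1 (Hconn h))) as [v Hv]. destruct (Hc v); [left|right]; eauto.
    - intros x y Hxy [_ [Hx [_ Hy]]].
      destruct (Hhon _ _ Hxy) as [v [Hv1 Hv2]].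
      destruct (Hc v) as [Ha|Hb].
      + apply Hy. eauto.
      + apply Hx. eauto. }
  assert (HX : forall h, (exists v, GS h v /\ A v) -> (exists v, GS h v /\ B v) -> In h L).
  { intros h [v1 [Hg1 Ha1]] [v2 [Hg2 Hb2]].
    destruct (cross G A B (GS h) v1 v2 Hsep) as [v [Hv [Ha Hb]]]; auto.
    apply (HinL v); auto. }
  split; [exact HsepH|]. split.
  - exists L. split; [|intros v [Ha Hb]; auto].
    eapply Nat.le_trans; [exact HL| apply Nat.mul_le_mono_r; exact HlG].
  - apply make_dist with L; auto.
    + intros N. destruct (proj1 Hdist rG HrG (ray_equiv_refl _ _ HrG)) as [N0 HN0].
      destruct (Hgr2 N) as [K1 HK1]. specialize (HK1 (max N0 K1) ltac:(lia)).
      exists (S (gr (max N0 K1))). split; [lia|].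
      exists (rG (max N0 K1)). split; auto. apply HN0; lia.
    + intros N. destruct (proj2 Hdist sG HsG (ray_equiv_refl _ _ HsG)) as [N0 HN0].
      destruct (Hgs2 N) as [K1 HK1]. specialize (HK1 (max N0 K1) ltac:(lia)).
      exists (S (gs (max N0 K1))). split; [lia|].
      exists (sG (max N0 K1)). split; auto. apply HN0; lia.
Qed.

Theorem lemma3p6 (G H : Graph) :
  (forall (GS : H -> G -> Prop) (GE : H -> G -> G -> Prop),
     Hdecomp GS GE -> point_finite GS -> honest GS ->
     (forall h, connected_sub (GS h) (GE h)) ->
     (exists K, forall h, card_le (GS h) K) ->
     accessible H -> accessible G) /\
  (forall (GS : H -> G -> Prop) (GE : H -> G -> G -> Prop),
     Hdecomp GS GE -> honest GS ->
     (forall h, connected_sub (GS h) (GE h) /\ finite_set (GS h)) ->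
     (exists K, forall v : G, card_le (fun h => GS h v) K) ->
     accessible G -> accessible H).
Proof.
  split.
  - intros GS GE. apply part1.
  - intros GS GE. apply part2.
Qed.
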